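(* Let $\lambda>0$, $\omega_0\ne0$ with $\omega_0^2/(2\lambda)<2$, $e=1-\omega_0^2/(2\lambda)$, and let $\tilde{\mathbf r}_\lambda(t,\omega_0)$ be the trajectory defined in the context. Then for every $t\ge0$, with $\varphi=\varphi(t)$ and $f(\varphi),T(\varphi),b(\varphi)$ the cohesion, kinetic energy and root-mean-square size of the system at time $t$, $$f(\varphi)=\frac{C(\mathbf m)}{b(\varphi)\sqrt{\sum_jm_j}},\qquad T(\varphi)=\frac{C(\mathbf m)}{2b(\varphi)\sqrt{\sum_jm_j}}\cdot\frac{1+e^2-2e\cos\varphi}{1-e\cos\varphi}.$$
   Context: Fix $N\ge2$, masses $\mathbf m=(m_1,\dots,m_N)$, $m_i>0$, $\gamma>0$. Planar configuration space $\mathfrak R=\{\mathbf r=(\mathbf r_1,\dots,\mathbf r_N)\in(\mathbb R^2)^N:\ \mathbf r_i\neq\mathbf r_j \text{ for } i\neq j\}$; cohesion $f(\mathbf r)=\sum_{i<j}\frac{\gamma m_im_j}{|\mathbf r_j-\mathbf r_i|}$; $g(\mathbf r)=\sum_i m_i|\mathbf r_i|^2$; root-mean-square size $b(\mathbf r)=\sqrt{g(\mathbf r)/\sum_jm_j}$; kinetic energy $T=\frac12\sum_j m_j|\dot{\mathbf r}_j|^2$; $C(\mathbf m)=\min\{f(\mathbf r):\mathbf r\in\mathfrak R,\ g(\mathbf r)=1\}$. Let $\mathbf r_\lambda=(\mathbf r_{1\lambda},\dots,\mathbf r_{N\lambda})$ be a global minimizer of $f+\lambda g$ on $\mathfrak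 R$; identify $\mathbb R^2$ with $\mathbb C$, $z_{j\lambda}\leftrightarrow\mathbf r_{j\lambda}$. Put $a(\varphi)=(1-e)/(1-e\cos\varphi)$ and define $\varphi(t)$ by $\omega_0t=\int_0^{\varphi(t)}\frac{(1-e)^2\,d\alpha}{(1-e\cos\alpha)^2}$. The trajectory $\tilde{\mathbf r}_\lambda(t,\omega_0)$ has $j$-th particle at complex position $z_{j\lambda}a(\varphi(t))e^{i\varphi(t)}$; it solves the planar Newtonian $N$-body equations $m_j\ddot{\mathbf r}_j=\sum_{k\ne j}\gamma m_jm_k(\mathbf r_k-\mathbf r_j)/|\mathbf r_k-\mathbf r_j|^3$. *)

(* Defs.v *)
From Stdlib Require Import Reals Lra List.
From Coquelicot Require Import Coquelicot.
Import ListNotations.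
Open Scope R_scope.

(* Particles are indexed by 0 .. N-1; a configuration is a map nat -> C
   whose values at indices >= N are irrelevant. *)
Definition sumN (N : nat) (F : nat -> R) : R :=
  fold_right Rplus 0 (map F (seq 0 N)).

Definition config (N : nat) (r : nat -> C) : Prop :=
  forall i j, (i < N)%nat -> (j < N)%nat -> i <> j -> r i <> r j.

Definition cohesion (N : nat) (m : nat -> R) (gam : R) (r : nat -> C) : R :=
  sumN N (fun i => sumN N (fun j =>
    if Nat.ltb i j then gam * m i * m j / Cmod (Cminus (r j) (r i)) else 0)).

Definition gmom (N : nat) (m : nat -> R) (r : nat -> C) : R :=
  sumN N (fun i => m i * (Cmod (r i)) ^ 2).

Definition mass (N : nat) (m : nat -> R) : R := sumN N m.

Definition rms (N : nat) (m : nat -> R) (r : nat -> C) : R :=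
  sqrt (gmom N m r / mass N m).

(* C(m) = min { f(r) : r in config space, g(r) = 1 } (taken as the infimum,
   which is the minimum when attained). *)
Definition Cmin (N : nat) (m : nat -> R) (gam : R) : R :=
  real (Glb_Rbar (fun y => exists r, config N r /\ gmom N m r = 1 /\ y = cohesion N m gam r)).

Definition kinetic (N : nat) (m : nat -> R) (q : R -> nat -> C) (t : R) : R :=
  / 2 * sumN N (fun j => m j *
     ((Derive (fun s => fst (q s j)) t) ^ 2 + (Derive (fun s => snd (q s j)) t) ^ 2)).

Definition aecc (e ph : R) : R := (1 - e) / (1 - e * cos ph).

Definition traj (e : R) (z : nat -> C) (phi : R -> R) (t : R) (j : nat) : C :=
  Cmult (z j) (aecc e (phi t) * cos (phi t), aecc e (phi t) * sin (phi t)).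

(* Main.v *)
Require Import Defs.
From Stdlib Require Import Reals Lra Lia List.
From Coquelicot Require Import Coquelicot.
Import ListNotations.
Open Scope R_scope.

Lemma sumL_ext (l : list nat) F G : (forall i, In i l -> F i = G i) ->
  fold_right Rplus 0 (map F l) = fold_right Rplus 0 (map G l).
Proof. induction l as [|a l IH]; simpl; intros H; auto.
  rewrite H by auto. rewrite IH; auto. Qed.

Lemma sumL_scal (l : list nat) k F :
  fold_right Rplus 0 (map (fun i => k * F i) l) = k * fold_right Rplus 0 (map F l).
Proof. induction l as [|a l IH]; simpl; [ring|]. rewrite IH; ring. Qed.

Lemma sumL_nonneg (l : list nat) F : (forall i, In i l -> 0 <= F i) ->
  0 <= fold_right Rplus 0 (map F l).
Proof. induction l as [|a l IH]; simpl; intros H; [lra|].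
  assert (0 <= F a) by auto. assert (0 <= fold_right Rplus 0 (map F l)) by auto. lra. Qed.

Lemma sumL_ge (l : list nat) F i : (forall i, In i l -> 0 <= F i) -> In i l ->
  F i <= fold_right Rplus 0 (map F l).
Proof. induction l as [|a l IH]; simpl; intros H Hi; [tauto|].
  destruct Hi as [<-|Hi].
  - assert (0 <= fold_right Rplus 0 (map F l)) by (apply sumL_nonneg; auto). lra.
  - assert (0 <= F a) by auto. assert (F i <= fold_right Rplus 0 (map F l)) by auto. lra. Qed.

Lemma sumN_ext N F G : (forall i, (i < N)%nat -> F i = G i) -> sumN N F = sumN N G.
Proof. intros H; unfold sumN; apply sumL_ext; intros i Hi; apply in_seq in Hi; apply H; lia. Qed.

Lemma sumN_scal N k F : sumN N (fun i => k * F i) = k * sumN N F.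
Proof. apply sumL_scal. Qed.

Lemma Cminus_mult (a b u : C) : Cminus (Cmult a u) (Cmult b u) = Cmult (Cminus a b) u.
Proof. destruct a, b, u; unfold Cminus, Cmult, Cplus, Copp; simpl; f_equal; ring. Qed.

Definition scl (r : nat -> C) (u : C) := fun i => Cmult (r i) u.

Lemma cohesion_scl N m gam r u :
  cohesion N m gam (scl r u) = / Cmod u * cohesion N m gam r.
Proof. unfold cohesion. rewrite <- sumN_scal. apply sumN_ext; intros i _.
  rewrite <- sumN_scal. apply sumN_ext; intros j _.
  destruct (Nat.ltb i j); [|ring]. unfold scl. rewrite Cminus_mult, Cmod_mult.
  unfold Rdiv. rewrite Rinv_mult. ring. Qed.

Lemma gmom_scl N m r u : gmom N m (scl r u) = Cmod u ^ 2 * gmom N m r.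
Proof. unfold gmom. rewrite <- sumN_scal. apply sumN_ext; intros i _.
  unfold scl. rewrite Cmod_mult. ring. Qed.

Lemma config_scl N r u : u <> (0,0) -> config N r -> config N (scl r u).
Proof. intros Hu Hc i j Hi Hj Hij E. apply (Hc i j Hi Hj Hij).
  assert (E2 : Cmod (Cminus (r i) (r j)) * Cmod u = 0).
  { rewrite <- Cmod_mult, <- Cminus_mult. unfold scl in E. rewrite E.
    destruct (Cmult (r j) u) as [p q]. unfold Cminus, Cplus, Copp; simpl.
    replace (p + - p) with 0 by ring. replace (q + - q) with 0 by ring. apply Cmod_0. }
  apply Rmult_integral in E2. destruct E2 as [E2|E2].
  - apply Cmod_eq_0 in E2. destruct (r i), (r j). unfold Cminus, Cplus, Copp in E2; simpl in E2.
    injection E2; intros; f_equal; lra.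
  - apply Cmod_eq_0 in E2. contradiction. Qed.

Lemma Cmod_real s : 0 <= s -> Cmod (s, 0) = s.
Proof. intros H. unfold Cmod; simpl. replace (s*(s*1) + 0*(0*1)) with (s*s) by ring.
  apply sqrt_square; auto. Qed.

Lemma Cmod_polar A x : 0 <= A -> Cmod (A * cos x, A * sin x) = A.
Proof. intros H. unfold Cmod; simpl.
  replace (A * cos x * (A * cos x * 1) + A * sin x * (A * sin x * 1)) with (A*A) by (pose proof (sin2_cos2 x); unfold Rsqr in *; nra).
  apply sqrt_square; auto. Qed.
Lemma crit_alg A B : 0 < B -> (forall s, 0 < s -> A + B <= / s * A + B * s ^ 2) -> A = 2 * B.
Proof. intros HB H.
  destruct (Rtotal_order A (2*B)) as [Hl|[He|Hg]]; auto; exfalso.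
  - set (d := Rmin (1/2) ((2*B-A)/(6*B))).
    assert (d1 : 0 < d). { unfold d; apply Rmin_glb_lt; [lra|]. apply Rdiv_lt_0_compat; lra. }
    assert (d2 : d <= 1/2) by apply Rmin_l.
    assert (d3 : d <= (2*B-A)/(6*B)) by apply Rmin_r.
    assert (d4 : 6*B*d <= 2*B-A). { assert (HX : (2*B-A)/(6*B) * (6*B) = 2*B-A) by (field; lra). nra. }
    specialize (H (1-d) ltac:(lra)).
    assert (Hs : (1-d) * (A+B) <= A + B*(1-d)^3).
    { apply (Rmult_le_compat_l (1-d)) in H; [|lra].
      replace ((1-d) * (/(1-d)*A + B*(1-d)^2)) with (A + B*(1-d)^3) in H; [lra|].
      field. lra. }
    assert (K : d * (A - 2*B + 3*B*d - B*d^2) >= 0) by nra.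
    assert (K2 : A - 2*B + 3*B*d - B*d^2 >= 0).
    { destruct (Rlt_or_le (A - 2*B + 3*B*d - B*d^2) 0); [|lra]. nra. }
    nra.
  - set (d := Rmin 1 ((A-2*B)/(8*B))).
    assert (d1 : 0 < d). { unfold d; apply Rmin_glb_lt; [lra|]. apply Rdiv_lt_0_compat; lra. }
    assert (d2 : d <= 1) by apply Rmin_l.
    assert (d3 : d <= (A-2*B)/(8*B)) by apply Rmin_r.
    assert (d4 : 8*B*d <= A-2*B). { assert (HX : (A-2*B)/(8*B) * (8*B) = A-2*B) by (field; lra). nra. }
    specialize (H (1+d) ltac:(lra)).
    assert (Hs : (1+d) * (A+B) <= A + B*(1+d)^3).
    { apply (Rmult_le_compat_l (1+d)) in H; [|lra].
      replace ((1+d) * (/(1+d)*A + B*(1+d)^2)) with (A + B*(1+d)^3) in H; [lra|].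
      field. lra. }
    assert (K : d * (B*(2+3*d+d^2) - A) >= 0) by nra.
    assert (K2 : B*(2+3*d+d^2) - A >= 0).
    { destruct (Rlt_or_le (B*(2+3*d+d^2) - A) 0); [|lra]. nra. }
    nra.
Qed.

Lemma min_facts N m gam lam rl : (2 <= N)%nat -> (forall i, (i < N)%nat -> 0 < m i) ->
  0 < lam -> config N rl ->
  (forall r, config N r ->
     cohesion N m gam rl + lam * gmom N m rl <= cohesion N m gam r + lam * gmom N m r) ->
  0 < gmom N m rl /\ cohesion N m gam rl = 2 * lam * gmom N m rl /\
  Cmin N m gam = cohesion N m gam rl * sqrt (gmom N m rl).
Proof. intros HN Hm Hl Hc Hmin.
  set (F := cohesion N m gam rl). set (G := gmom N m rl).
  assert (HG : 0 < G).
  { assert (Hnn : forall i, In i (seq 0 N) -> 0 <= m i * Cmod (rl i) ^ 2).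
    { intros i Hi; apply in_seq in Hi. pose proof (Hm i ltac:(lia)). pose proof (Cmod_ge_0 (rl i)). nra. }
    assert (H01 := Hc 0%nat 1%nat ltac:(lia) ltac:(lia) ltac:(lia)).
    assert (exists i, (i < N)%nat /\ rl i <> (0,0)) as [i [Hi Hne]].
    { destruct (rl 0%nat) as [a b] eqn:E0.
      destruct (Req_dec a 0); [destruct (Req_dec b 0)|].
      - subst. exists 1%nat; split; [lia|]. intros E; apply H01; congruence.
      - exists 0%nat; split; [lia|]. rewrite E0; intros E; injection E; lra.
      - exists 0%nat; split; [lia|]. rewrite E0; intros E; injection E; lra. }
    assert (Hp : 0 < Cmod (rl i)) by (apply Cmod_gt_0; exact Hne).
    pose proof (Hm i Hi).
    apply Rlt_le_trans with (m i * Cmod (rl i) ^ 2); [apply Rmult_lt_0_compat; [lra|apply pow_lt; lra]|].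
    unfold G, gmom, sumN. apply sumL_ge with (F := fun i => m i * Cmod (rl i) ^ 2); auto.
    apply in_seq; lia. }
  assert (Hsc : forall s, 0 < s -> config N (scl rl (s,0)) /\
     cohesion N m gam (scl rl (s,0)) = / s * F /\ gmom N m (scl rl (s,0)) = s^2 * G).
  { intros s Hs. rewrite cohesion_scl, gmom_scl, Cmod_real by lra. repeat split; auto.
    apply config_scl; auto. intros E; injection E; lra. }
  assert (HF : F = 2 * lam * G).
  { rewrite Rmult_assoc. apply crit_alg; [nra|]. intros s Hs.
    destruct (Hsc s Hs) as [H1 [H2 H3]]. specialize (Hmin _ H1). rewrite H2, H3 in Hmin.
    fold F G in Hmin. nra. }
  split; [exact HG|]. split; [exact HF|].
  unfold Cmin. set (E := fun y => _).
  assert (Hsg : 0 < sqrt G) by (apply sqrt_lt_R0; auto).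
  assert (Hgl : is_glb_Rbar E (F * sqrt G)).
  { split.
    - intros y [r [Hr [Hg1 ->]]]. simpl.
      destruct (Hsc (sqrt G) Hsg) as [_ [H2 H3]].
      assert (Hr' := config_scl N r (sqrt G, 0) ltac:(intros Ee; injection Ee; lra) Hr).
      specialize (Hmin _ Hr'). rewrite cohesion_scl, gmom_scl, Cmod_real, Hg1 in Hmin by lra.
      rewrite pow2_sqrt in Hmin by lra. fold F G in Hmin.
      assert (/ sqrt G * cohesion N m gam r >= F) by lra.
      apply (Rmult_ge_compat_l (sqrt G)) in H; [|lra].
      rewrite <- Rmult_assoc, Rinv_r in H; lra.
    - intros b Hb. apply Hb.
      destruct (Hsc (/ sqrt G) ltac:(apply Rinv_0_lt_compat; auto)) as [H1 [H2 H3]].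
      exists (scl rl (/ sqrt G, 0)). split; [auto|]. split.
      + rewrite H3. rewrite pow_inv, pow2_sqrt by lra. field; lra.
      + rewrite H2, Rinv_inv. ring. }
  rewrite (is_glb_Rbar_unique _ _ Hgl). reflexivity.
Qed.
Lemma inv_deriv (H h phi : R -> R) (w c : R) : 0 < c ->
  (forall x, is_derive H x (h x)) -> (forall x, continuity_pt h x) ->
  (forall x, c <= h x) -> (forall t, H (phi t) = w * t) ->
  forall t, is_derive phi t (w / h (phi t)).
Proof. intros Hc HD Hcont Hlow Hphi t.
  apply is_derive_Reals. intros eps Heps.
  set (k := eps * c ^ 2 / (Rabs w + 1)).
  assert (Hk : 0 < k) by (unfold k; apply Rdiv_lt_0_compat; [apply Rmult_lt_0_compat; [lra|apply pow_lt; lra]|pose proof (Rabs_pos w); lra]).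
  destruct (proj1 (continuity_pt_locally h (phi t)) (Hcont (phi t)) (mkposreal k Hk)) as [d1 Hd1].
  simpl in Hd1.
  assert (Hw1 : 0 < Rabs w + 1) by (pose proof (Rabs_pos w); lra).
  assert (Hd : 0 < d1 * c / (Rabs w + 1)) by (apply Rdiv_lt_0_compat; [apply Rmult_lt_0_compat; [apply cond_pos|lra]|lra]).
  exists (mkposreal _ Hd). simpl. intros s Hs0 Hs.
  destruct (MVT_gen H (phi t) (phi (t + s)) h) as [xi [Hxi Heq]].
  { intros x _; apply HD. }
  { intros x _. apply continuity_pt_filterlim. exact (ex_derive_continuous H x (ex_intro _ _ (HD x))). }
  rewrite !Hphi in Heq.
  assert (Hhx : c <= h xi) by apply Hlow.
  assert (Hht : c <= h (phi t)) by apply Hlow.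
  assert (Hdiff : phi (t + s) - phi t = w * s / h xi) by (replace (w * s / h xi) with ((w*(t+s) - w*t)/h xi) by (field; lra); rewrite Heq; field; lra).
  assert (Hq : (phi (t + s) - phi t) / s = w / h xi) by (rewrite Hdiff; field; split; lra).
  rewrite Hq.
  assert (Hb : Rabs (phi (t + s) - phi t) < d1).
  { rewrite Hdiff. unfold Rdiv. rewrite !Rabs_mult, (Rabs_inv (h xi)), (Rabs_right (h xi)) by lra.
    assert (Hs' : Rabs s * (Rabs w + 1) < d1 * c).
    { apply Rmult_lt_compat_r with (r := Rabs w + 1) in Hs; [|lra].
      unfold Rdiv in Hs. rewrite Rmult_assoc, Rinv_l in Hs; lra. }
    assert (Rabs w * Rabs s <= Rabs s * (Rabs w + 1) - Rabs s) by nra.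
    assert (Hi : / h xi <= / c) by (apply Rinv_le_contravar; lra).
    assert (0 < / h xi) by (apply Rinv_0_lt_compat; lra).
    assert (Hcc : c * / c = 1) by (field; lra).
    pose proof (Rabs_pos w). pose proof (Rabs_pos s).
    assert (Rabs w * Rabs s * / h xi <= Rabs w * Rabs s * / c) by (apply Rmult_le_compat_l; nra).
    assert (Rabs w * Rabs s * / c < d1) ; [|lra].
    apply Rmult_lt_reg_r with c; [lra|]. rewrite Rmult_assoc, Rinv_l by lra. nra. }
  assert (Hxib : Rabs (xi - phi t) < d1).
  { apply Rabs_def2 in Hb. destruct (Rle_dec (phi t) (phi (t+s))).
    - rewrite Rmin_left, Rmax_right in Hxi by lra. apply Rabs_def1; lra.
    - rewrite Rmin_right, Rmax_left in Hxi by lra. apply Rabs_def1; lra. }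
  specialize (Hd1 xi Hxib).
  replace (w / h xi - w / h (phi t)) with (w * (h (phi t) - h xi) / (h xi * h (phi t))) by (field; lra).
  unfold Rdiv. rewrite !Rabs_mult, Rabs_inv, (Rabs_right (h xi * h (phi t))) by nra.
  rewrite Rabs_minus_sym.
  assert (Hp : c ^ 2 <= h xi * h (phi t)) by (simpl; nra).
  assert (Hinv : / (h xi * h (phi t)) <= / c ^ 2) by (apply Rinv_le_contravar; [apply pow_lt; lra|lra]).
  assert (Hkk : Rabs w * k < eps * c ^ 2).
  { unfold k. apply Rmult_lt_reg_r with (Rabs w + 1); [lra|].
    replace (Rabs w * (eps * c ^ 2 / (Rabs w + 1)) * (Rabs w + 1)) with (Rabs w * (eps * c^2)) by (field; lra).
    assert (0 < eps * c^2) by (apply Rmult_lt_0_compat; [lra|apply pow_lt; lra]). nra. }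
  pose proof (Rabs_pos w). pose proof (Rabs_pos (h xi - h (phi t))).
  assert (0 < / (h xi * h (phi t))) by (apply Rinv_0_lt_compat; nra).
  assert (Rabs w * Rabs (h xi - h (phi t)) <= Rabs w * k) by (apply Rmult_le_compat_l; lra).
  apply Rle_lt_trans with (Rabs w * k * / c ^ 2).
  { apply Rle_trans with (Rabs w * Rabs (h xi - h (phi t)) * / c ^ 2).
    - apply Rmult_le_compat_l; nra.
    - apply Rmult_le_compat_r; [left; apply Rinv_0_lt_compat, pow_lt; lra|lra]. }
  apply Rmult_lt_reg_r with (c ^ 2); [apply pow_lt; lra|].
  rewrite Rmult_assoc, Rinv_l by (apply pow_nonzero; lra). lra.
Qed.
Lemma D_pos e x : -1 < e < 1 -> 0 < 1 - e * cos x /\ 1 - e * cos x <= 2.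
Proof. intros He. pose proof (COS_bound x). destruct (Rle_dec 0 e); split; nra. Qed.

Lemma Pc_der e x : -1 < e < 1 ->
  is_derive (fun x => aecc e x * cos x) x (- (1 - e) * sin x / (1 - e * cos x) ^ 2).
Proof. intros He. destruct (D_pos e x He). unfold aecc. auto_derive.
  - lra.
  - field. lra. Qed.

Lemma Ps_der e x : -1 < e < 1 ->
  is_derive (fun x => aecc e x * sin x) x ((1 - e) * (cos x - e) / (1 - e * cos x) ^ 2).
Proof. intros He. destruct (D_pos e x He). unfold aecc. auto_derive.
  - lra.
  - assert (S : sin x ^ 2 = 1 - cos x ^ 2) by (rewrite <- (sin2_cos2 x); unfold Rsqr; ring).
    field_simplify_eq; [|lra]. rewrite !S. ring. Qed.

Lemma h_der e x : -1 < e < 1 ->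
  ex_derive (fun a => (1 - e) ^ 2 / (1 - e * cos a) ^ 2) x.
Proof. intros He. destruct (D_pos e x He). auto_derive. nra. Qed.

Lemma lin_der (f g : R -> R) a b x df dg : is_derive f x df -> is_derive g x dg ->
  is_derive (fun y => a * f y - b * g y) x (a * df - b * dg).
Proof. intros H1 H2. apply is_derive_Reals in H1, H2. apply is_derive_Reals.
  apply (derivable_pt_lim_minus (fun y => a * f y) (fun y => b * g y));
  apply derivable_pt_lim_scal; auto. Qed.

Lemma lin_der' (f g : R -> R) a b x df dg : is_derive f x df -> is_derive g x dg ->
  is_derive (fun y => a * f y + b * g y) x (a * df + b * dg).
Proof. intros H1 H2. apply is_derive_Reals in H1, H2. apply is_derive_Reals.
  apply (derivable_pt_lim_plus (fun y => a * f y) (fun y => b * g y));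
  apply derivable_pt_lim_scal; auto. Qed.

Theorem theorem8p3 (N : nat) (m : nat -> R) (gam lam om0 : R)
  (rl : nat -> C) (phi : R -> R) :
  (2 <= N)%nat ->
  (forall i, (i < N)%nat -> 0 < m i) ->
  0 < gam -> 0 < lam -> om0 <> 0 -> om0 ^ 2 / (2 * lam) < 2 ->
  (* rl is a global minimizer of f + lam g on the configuration space *)
  config N rl ->
  (forall r, config N r ->
     cohesion N m gam rl + lam * gmom N m rl <= cohesion N m gam r + lam * gmom N m r) ->
  let e := 1 - om0 ^ 2 / (2 * lam) in
  (* phi is defined by om0 t = int_0^{phi t} (1-e)^2/(1 - e cos a)^2 da *)
  (forall t, om0 * t = RInt (fun a => (1 - e) ^ 2 / (1 - e * cos a) ^ 2) 0 (phi t)) ->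
  forall t, 0 <= t ->
    cohesion N m gam (traj e rl phi t)
      = Cmin N m gam / (rms N m (traj e rl phi t) * sqrt (mass N m)) /\
    kinetic N m (traj e rl phi) t
      = Cmin N m gam / (2 * rms N m (traj e rl phi t) * sqrt (mass N m))
        * ((1 + e ^ 2 - 2 * e * cos (phi t)) / (1 - e * cos (phi t))).
Proof.
  intros HN Hm Hgam Hlam Hom Hq Hc Hmin e Hint t Ht.
  assert (He : e = 1 - om0 ^ 2 / (2 * lam)) by reflexivity. clearbody e.
  destruct (min_facts N m gam lam rl HN Hm Hlam Hc Hmin) as [HG [HF HC]].
  set (F := cohesion N m gam rl) in *. set (G := gmom N m rl) in *.
  assert (Hom2 : 0 < om0 ^ 2) by (apply pow2_gt_0; auto).
  assert (Hq0 : 0 < om0 ^ 2 / (2 * lam)) by (apply Rdiv_lt_0_compat; lra).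
  assert (Hebd : -1 < e < 1) by lra.
  assert (Hom2' : om0 ^ 2 = 2 * lam * (1 - e)) by (rewrite He; field; lra).
  set (h := fun a => (1 - e) ^ 2 / (1 - e * cos a) ^ 2) in *.
  set (c := (1 - e) ^ 2 / 4).
  assert (Hcpos : 0 < c) by (unfold c; apply Rdiv_lt_0_compat; [apply pow2_gt_0|]; lra).
  assert (Hlow : forall x, c <= h x).
  { intros x. destruct (D_pos e x Hebd) as [D1 D2]. unfold h, c.
    apply Rmult_le_compat_l; [apply pow2_ge_0|]. apply Rinv_le_contravar; [apply pow_lt; lra|].
    simpl. nra. }
  assert (Hhc : forall x, continuity_pt h x).
  { intros x. apply continuity_pt_filterlim. exact (ex_derive_continuous h x (h_der e x Hebd)). }
  assert (HD : forall x, is_derive (fun y => RInt h 0 y) x (h x)).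
  { intros x. apply is_derive_RInt with (a := 0).
    - apply filter_forall. intros y. apply RInt_correct. apply ex_RInt_continuous.
      intros z _. apply continuity_pt_filterlim, Hhc.
    - apply continuity_pt_filterlim, Hhc. }
  assert (Hdphi := inv_deriv (fun y => RInt h 0 y) h phi om0 c Hcpos HD Hhc Hlow
                    (fun t => eq_sym (Hint t)) t).
  set (x := phi t) in *.
  destruct (D_pos e x Hebd) as [D1 D2].
  set (A := aecc e x).
  assert (HA : 0 < A) by (unfold A, aecc; apply Rdiv_lt_0_compat; lra).
  assert (Htr : traj e rl phi t = scl rl (A * cos x, A * sin x)) by reflexivity.
  assert (HcA : Cmod (A * cos x, A * sin x) = A) by (apply Cmod_polar; lra).
  assert (Hcoh : cohesion N m gam (traj e rl phi t) = / A * F)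
    by (rewrite Htr, cohesion_scl, HcA; reflexivity).
  assert (Hgm : gmom N m (traj e rl phi t) = A ^ 2 * G)
    by (rewrite Htr, gmom_scl, HcA; reflexivity).
  assert (HM : 0 < mass N m).
  { unfold mass, sumN. apply Rlt_le_trans with (m 0%nat); [apply Hm; lia|].
    apply sumL_ge with (F := m); [|apply in_seq; lia].
    intros i Hi; apply in_seq in Hi; left; apply Hm; lia. }
  assert (Hrms : rms N m (traj e rl phi t) * sqrt (mass N m) = A * sqrt G).
  { unfold rms. rewrite <- sqrt_mult_alt.
    - rewrite Hgm. replace (A ^ 2 * G / mass N m * mass N m) with (A ^ 2 * G) by (field; lra).
      rewrite sqrt_mult_alt by (apply pow2_ge_0). rewrite sqrt_pow2 by lra. reflexivity.
    - rewrite Hgm. apply Rdiv_le_0_compat; [|lra]. apply Rmult_le_pos; [apply pow2_ge_0|lra]. }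
  assert (HsG : 0 < sqrt G) by (apply sqrt_lt_R0; lra).
  split.
  { rewrite Hcoh, Hrms, HC. field. lra. }
  set (dphi := om0 / h x) in *.
  set (Pc' := - (1 - e) * sin x / (1 - e * cos x) ^ 2).
  set (Ps' := (1 - e) * (cos x - e) / (1 - e * cos x) ^ 2).
  assert (HPc := Pc_der e x Hebd). assert (HPs := Ps_der e x Hebd).
  fold Pc' Ps' in HPc, HPs.
  assert (Hd1 : forall j, Derive (fun s => fst (traj e rl phi s j)) t
                  = dphi * (fst (rl j) * Pc' - snd (rl j) * Ps')).
  { intros j. apply is_derive_unique.
    change (is_derive (fun s => (fun y => fst (rl j) * (aecc e y * cos y) - snd (rl j) * (aecc e y * sin y)) (phi s)) t
      (dphi * (fst (rl j) * Pc' - snd (rl j) * Ps'))).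
    apply (is_derive_comp (fun y => fst (rl j) * (aecc e y * cos y) - snd (rl j) * (aecc e y * sin y)) phi t).
    - apply lin_der; auto.
    - exact Hdphi. }
  assert (Hd2 : forall j, Derive (fun s => snd (traj e rl phi s j)) t
                  = dphi * (fst (rl j) * Ps' + snd (rl j) * Pc')).
  { intros j. apply is_derive_unique.
    change (is_derive (fun s => (fun y => fst (rl j) * (aecc e y * sin y) + snd (rl j) * (aecc e y * cos y)) (phi s)) t
      (dphi * (fst (rl j) * Ps' + snd (rl j) * Pc'))).
    apply (is_derive_comp (fun y => fst (rl j) * (aecc e y * sin y) + snd (rl j) * (aecc e y * cos y)) phi t).
    - apply lin_der'; auto.
    - exact Hdphi. }
  set (K := dphi ^ 2 * (Pc' ^ 2 + Ps' ^ 2)).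
  assert (Hkin : kinetic N m (traj e rl phi) t = / 2 * (K * G)).
  { unfold kinetic. f_equal. unfold G, gmom. rewrite <- sumN_scal. apply sumN_ext. intros j _.
    rewrite Hd1, Hd2, Cmod2_alt. unfold K, Re, Im. ring. }
  assert (HK : K = 2 * lam * (1 + e ^ 2 - 2 * e * cos x) / (1 - e)).
  { unfold K, dphi, Pc', Ps'.
    assert (Hh : 0 < h x) by (pose proof (Hlow x); lra).
    replace ((om0 / h x) ^ 2) with (om0 ^ 2 / (h x) ^ 2) by (field; lra).
    rewrite Hom2'. unfold h.
    assert (S : sin x ^ 2 = 1 - cos x ^ 2) by (rewrite <- (sin2_cos2 x); unfold Rsqr; ring).
    field_simplify_eq; [|repeat split; lra]. rewrite !S. ring. }
  rewrite Hkin, HK.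
  replace (2 * rms N m (traj e rl phi t) * sqrt (mass N m)) with (2 * (A * sqrt G)) by (rewrite Rmult_assoc, Hrms; reflexivity).
  rewrite HC, HF. unfold A, aecc. field. split; [lra|]. split; [lra|lra].
Qed.
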